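(* Let $d>3$, and consider Jackson networks with $d$ queues and routing matrix $p_{ij}=p\in(0,1/(d-1))$ for all $i\ne j$ (and $p_{ii}=0$), satisfying: $\lambda_1+\dots+\lambda_d=1$ with $0=\lambda_1<\lambda_i$ for all $i\in\{2,\dots,d\}$; and $\sqrt{\mu_i}-\sqrt{\nu_i}=t>0$ for all $i\in\{1,\dots,d\}$, where $\nu$ is the solution of the traffic equations; assume also hypotheses (A) and (B). Then for every $p>0$ small enough there is $t_p>0$ such that for every $t>t_p$ the equality $$\sup_{\gamma\in\Gamma}\min_{1\le i\le d}\gamma_i\Bigl(\frac{\mu_i}{1+\gamma_i}-\nu_i\Bigr)=\min_{1\le i\le d}\bigl(\sqrt{\mu_i}-\sqrt{\nu_i}\bigr)^2$$ fails to hold.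
   Context: Jackson network with $d$ queues: arrival rates $\lambda_i\ge0$, service rates $\mu_i>0$, routing matrix $P=(p_{ij})_{i,j=1}^d$ nonnegative with $p_{ii}=0$, $\sum_jp_{ij}\le1$, $p_{i0}=1-\sum_jp_{ij}$. Hypothesis (A): the jump-rate kernel on $\mathbb{Z}^d$ (jumps $+\epsilon^i$ at rate $\lambda_i$, $-\epsilon^i$ at rate $\mu_ip_{i0}$, $\epsilon^j-\epsilon^i$ at rate $\mu_ip_{ij}$) is irreducible (equivalently spectral radius of $P$ $<1$ and for every $i$ some $\lambda_jp^{(n)}_{ji}>0$); the traffic equations $\nu_j=\lambda_j+\sum_i\nu_ip_{ij}$ (which depend only on $\lambda$ and $P$) have a unique solution with $\nu_i>0$. Hypothesis (B): $\nu_i<\mu_i$ for all $i$. $Q_{ij}$: probability that the chain on $\{0,\dots,d\}$ with transitions $p_{ij}$ ($0$ absorbing) started at $i$ ever visits $j$ (time $0$ included). For $\gamma\in\mathbb{R}_+^d$, $\overrightarrow{\gamma_i}$ has components $\gamma_i^j=\log(1+Q_{ji}\gamma_i)$; $\Gamma$ is the set of $\gamma\in\mathbb{R}_+^d$ such that for every $i$ and nonzero $v\in\mathbb{R}_+^d$ with $v^i=0$, $\overrightarrow{\gamma_i}\cdot v<\max_j\overrightarrow{\gamma_j}\cdot v$. *)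

(* Defs.v *)
From Stdlib Require Import Relations.
From HB Require Import structures.
From mathcomp Require Import all_boot all_order all_algebra.
From mathcomp Require Import all_classical all_reals all_analysis.
Set Implicit Arguments. Unset Strict Implicit. Unset Printing Implicit Defensive.
Import Order.TTheory GRing.Theory Num.Theory.
Import numFieldNormedType.Exports.
Local Open Scope classical_set_scope.
Local Open Scope ring_scope.

Section Jackson.
Variables (R : realType) (d : nat).

Definition unif_routing (p : R) : 'I_d -> 'I_d -> R :=
  fun i j => if i == j then 0 else p.

Definition exit_prob (P : 'I_d -> 'I_d -> R) (i : 'I_d) : R :=
  1 - \sum_(j < d) P i j.

Definition unitZ (i : 'I_d) : 'I_d -> int := fun k => if k == i then 1%Z else 0%Z.

Definition jump_step (lam mu : 'I_d -> R) (P : 'I_d -> 'I_d -> R)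
  (x y : 'I_d -> int) : Prop :=
  exists i : 'I_d,
    (0 < lam i /\ y = (fun k => x k + unitZ i k)%R)
 \/ (0 < mu i * exit_prob P i /\ y = (fun k => x k - unitZ i k)%R)
 \/ (exists j : 'I_d, 0 < mu i * P i j /\
       y = (fun k => x k + unitZ j k - unitZ i k)%R).

Definition hypA (lam mu : 'I_d -> R) (P : 'I_d -> 'I_d -> R) : Prop :=
  forall x y : 'I_d -> int,
    Relation_Operators.clos_refl_trans _ (jump_step lam mu P) x y.

Definition traffic_sol (lam : 'I_d -> R) (P : 'I_d -> 'I_d -> R)
  (nu : 'I_d -> R) : Prop :=
  forall j : 'I_d, nu j = lam j + \sum_(i < d) nu i * P i j.

Definition hypB (mu nu : 'I_d -> R) : Prop := forall i, nu i < mu i.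

(* taboo mass: a_n(k) = P_i(X_n = k, X_m <> j for all m < n), for the
   substochastic chain with transitions p (0 absorbing, not tracked) *)
Fixpoint taboo (P : 'I_d -> 'I_d -> R) (i j : 'I_d) (n : nat) : 'I_d -> R :=
  match n with
  | 0 => fun k => if k == i then 1 else 0
  | n'.+1 => fun k => \sum_(l < d | l != j) taboo P i j n' l * P l k
  end.

(* Q_ij = P_i(chain ever visits j, time 0 included)
        = sum_n P_i(first visit to j at time n) *)
Definition Qhit (P : 'I_d -> 'I_d -> R) (i j : 'I_d) : R :=
  limn (series (fun n => taboo P i j n j) : R ^nat).

Definition gvec (P : 'I_d -> 'I_d -> R) (g : 'I_d -> R) (i j : 'I_d) : R :=
  ln (1 + Qhit P j i * g i).

Definition dotv (u v : 'I_d -> R) : R := \sum_(k < d) u k * v k.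

Definition Gamma (P : 'I_d -> 'I_d -> R) : set ('I_d -> R) :=
  [set g | (forall i, 0 <= g i) /\
     forall (i : 'I_d) (v : 'I_d -> R),
       (forall k, 0 <= v k) -> (exists k, v k != 0) -> v i = 0 ->
       ((dotv (gvec P g i) v)%:E <
          \big[Order.max/-oo%E]_(j < d) (dotv (gvec P g j) v)%:E)%E].

Definition objective (mu nu g : 'I_d -> R) : \bar R :=
  \big[Order.min/+oo%E]_(i < d) (g i * (mu i / (1 + g i) - nu i))%:E.

Definition sup_value (P : 'I_d -> 'I_d -> R) (mu nu : 'I_d -> R) : \bar R :=
  ereal_sup [set objective mu nu g | g in Gamma P].

Definition sqrt_value (mu nu : 'I_d -> R) : \bar R :=
  \big[Order.min/+oo%E]_(i < d) ((Num.sqrt (mu i) - Num.sqrt (nu i)) ^+ 2)%:E.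

End Jackson.

(* Main.v *)
Require Import Defs.
From HB Require Import structures.
From mathcomp Require Import all_boot all_order all_algebra.
From mathcomp Require Import all_classical all_reals all_analysis.
From mathcomp Require Import ring lra.
Import Order.TTheory GRing.Theory Num.Theory.
Import numFieldNormedType.Exports.
Local Open Scope ring_scope.



Section Q.
Variables (R : realType) (d : nat) (p : R).
Local Notation P := (@unif_routing R d p).

Lemma sum_const_ord (c : R) : \sum_(k < d) c = d%:R * c.
Proof. by rewrite sumr_const card_ord mulr_natl. Qed.

Lemma sum_neq_const (j : 'I_d) (c : R) : \sum_(k < d | k != j) c = (d%:R - 1) * c.
Proof.
have := sum_const_ord c; rewrite (bigD1 j) //= => H.
apply: (addrI c); rewrite H; ring.
Qed.

Lemma row_all (l : 'I_d) : \sum_(k < d) P l k = (d%:R - 1) * p.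
Proof.
rewrite (bigD1 l) //= /unif_routing eqxx add0r -(sum_neq_const l).
by apply: eq_bigr => k /negbTE; rewrite eq_sym => ->.
Qed.

Lemma row_avoid (l j : 'I_d) : l != j ->
  \sum_(k < d | k != j) P l k = (d%:R - 2) * p.
Proof.
move=> lj; have := row_all l; rewrite (bigD1 j) //= {1}/unif_routing (negbTE lj) => H.
apply: (addrI p); rewrite H; ring.
Qed.

Lemma taboo_mass (k j : 'I_d) : k != j -> forall m,
  \sum_(l < d | l != j) taboo P k j m l = ((d%:R - 2) * p) ^+ m.
Proof.
move=> kj; elim=> [|m IH] /=.
  rewrite (bigD1 k) //= eqxx big1 ?addr0 // => l /andP[_ /negbTE ->] //.
rewrite exchange_big /= exprS mulrC -IH big_distrl /=.
apply: eq_bigr => l lj; rewrite -big_distrr /= row_avoid //.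
Qed.

Lemma taboo_hit (k j : 'I_d) : k != j -> forall m,
  taboo P k j m.+1 j = p * ((d%:R - 2) * p) ^+ m.
Proof.
move=> kj m /=; rewrite -(@taboo_mass k j kj) big_distrr /=; apply: eq_bigr => l lj.
by rewrite /unif_routing (negbTE lj) mulrC.
Qed.

Lemma taboo_self (j : 'I_d) m k : taboo P j j m.+1 k = 0.
Proof.
elim: m k => [|m IH] k.
  by rewrite /= big1 // => l /negbTE ->; rewrite mul0r.
change (\sum_(l < d | l != j) taboo P j j m.+1 l * P l k = 0).
by rewrite big1 // => l _; rewrite IH mul0r.
Qed.

Lemma Qhit_self (j : 'I_d) : Qhit P j j = 1.
Proof.
rewrite /Qhit; apply: cvg_lim; first exact: Rhausdorff.
rewrite -cvg_shiftS.
have -> : [sequence series (fun n => taboo P j j n j) n.+1]_n = (fun=> 1).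
  apply/funext => n /=; rewrite /series /= big_nat_recl //= eqxx.
  by rewrite big1 ?addr0 // => i _; exact: (taboo_self j i j).
exact: cvg_cst.
Qed.

Lemma Qhit_other (k j : 'I_d) : k != j -> 0 <= (d%:R - 2) * p -> (d%:R - 2) * p < 1 ->
  Qhit P k j = p / (1 - (d%:R - 2) * p).
Proof.
move=> kj p0 r1; rewrite /Qhit; apply: cvg_lim; first exact: Rhausdorff.
rewrite -cvg_shiftS.
have -> : [sequence series (fun n => taboo P k j n j) n.+1]_n =
          series (geometric p ((d%:R - 2) * p)).
  apply/funext => n /=; rewrite /series /= big_nat_recl //= eq_sym (negbTE kj) add0r.
  by apply: eq_bigr => i _; rewrite -(taboo_hit k j kj i).
have h : `|(d%:R - 2) * p| < 1 by rewrite ger0_norm.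
exact: (@cvg_geometric_series _ p _ h).
Qed.
End Q.



Lemma traffic_facts (R : realType) (d : nat) (lam nu : 'I_d -> R) (p : R) :
  \sum_(i < d) lam i = 1 ->
  traffic_sol lam (@unif_routing R d p) nu ->
  (forall j, nu j * (1 + p) = lam j + p * \sum_(i < d) nu i) /\
  (\sum_(i < d) nu i) * (1 - (d%:R - 1) * p) = 1.
Proof.
move=> hl ht.
have hj : forall j, nu j * (1 + p) = lam j + p * \sum_(i < d) nu i.
  move=> j; have := ht j; rewrite /unif_routing (bigD1 j) //= eqxx mulr0 add0r.
  rewrite [X in _ = _ + p * X](bigD1 j) //=.
  have -> : \sum_(i < d | i != j) nu i * (if i == j then 0 else p) =
            (\sum_(i < d | i != j) nu i) * p.
    by rewrite big_distrl /=; apply: eq_bigr => i /negbTE ->.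
  move=> ->; ring.
split=> //.
set N := \sum_(i < d) nu i.
have : \sum_(j < d) nu j * (1 + p) = \sum_(j < d) (lam j + p * N).
  by apply: eq_bigr => j _; rewrite hj.
rewrite -big_distrl /= big_split /= hl sum_const_ord -/N => h.
have -> : N * (1 - (d%:R - 1) * p) = N * (1 + p) - d%:R * (p * N) by ring.
by rewrite h; ring.
Qed.

Lemma window (R : realType) (s t g : R) : 0 < s -> 0 <= g -> 4 <= s * t -> 3 <= t ->
  t ^+ 2 - 1 < g * ((s + t) ^+ 2 / (1 + g) - s ^+ 2) ->
  t <= 2 * g * s /\ g * s <= 2 * t.
Proof.
move=> s0 g0 st t3 h.
have g1 : 0 < 1 + g by lra.
have key : (t - g * s) ^+ 2 < 1 + g.
  have e : g * ((s + t) ^+ 2 / (1 + g) - s ^+ 2) = t ^+ 2 - (t - g * s) ^+ 2 / (1 + g).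
    by field; rewrite lt0r_neq0.
  move: h; rewrite e => h.
  have : (t - g * s) ^+ 2 / (1 + g) < 1 by lra.
  by rewrite ltr_pdivrMr // mul1r.
split.
  rewrite leNgt; apply/negP => h1.
  have a : t / 2 < t - g * s by lra.
  have b : t ^+ 2 / 4 < (t - g * s) ^+ 2.
    have : (t/2) ^+ 2 < (t - g * s) ^+ 2 by rewrite ltr_pXn2r // ?nnegrE; lra.
    by rewrite expr_div_n; lra.
  have c : g * (s * t) <= t * t / 2 * 2 by nra.
  have c' : 4 * g <= t * t by nra.
  nra.
rewrite leNgt; apply/negP => h1.
have a : g * s / 2 < g * s - t by lra.
have b : (g * s) ^+ 2 / 4 < (g * s - t) ^+ 2.
  have : (g * s / 2) ^+ 2 < (g * s - t) ^+ 2 by rewrite ltr_pXn2r // ?nnegrE; nra.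
  by rewrite expr_div_n; lra.
have : (g * s - t) ^+ 2 = (t - g * s) ^+ 2 by ring.
nra.
Qed.



Lemma cubic (R : realType) (q s0 sj G0 Gj t : R) :
  0 < q -> q <= 1 -> 0 < s0 -> 0 < sj -> 512 * s0 ^+ 3 <= q * sj ^+ 3 ->
  t <= 2 * G0 * s0 -> Gj * sj <= 2 * t -> 1 <= q * Gj -> 0 <= G0 -> 0 < t ->
  Gj <= G0 /\ (1 + Gj) * (1 + q * Gj) ^+ 2 <= (1 + q * G0) ^+ 3.
Proof.
move=> q0 q1 s00 sj0 hs h0 hj hqj G00 t0.
have Gj1 : 1 <= Gj by nra.
have sj8 : 8 * s0 <= sj.
  rewrite leNgt; apply/negP => h.
  have : sj ^+ 3 < (8 * s0) ^+ 3 by rewrite ltr_pXn2r // ?nnegrE; nra.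
  rewrite exprMn; have -> : (8:R) ^+ 3 = 512 by rewrite !exprS expr0; ring.
  have := exprn_gt0 3 sj0; nra.
have e1 : Gj * (8 * s0) <= 2 * t by nra.
split; first nra.
have A : (1 + Gj) * (1 + q * Gj) ^+ 2 <= 8 * q ^+ 2 * Gj ^+ 3.
  have a1 : 1 + Gj <= 2 * Gj by lra.
  have a2 : 1 + q * Gj <= 2 * (q * Gj) by lra.
  have a3 : (1 + q * Gj) ^+ 2 <= (2 * (q * Gj)) ^+ 2 by rewrite ler_pXn2r // ?nnegrE; nra.
  have : (1 + Gj) * (1 + q * Gj) ^+ 2 <= (2 * Gj) * (2 * (q * Gj)) ^+ 2.
    apply: ler_pM => //; nra.
  move=> h; apply: (le_trans h); rewrite !exprS !expr0; nra.
have B : 8 * q ^+ 2 * Gj ^+ 3 <= (q * G0) ^+ 3.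
  have c1 : (Gj * sj) ^+ 3 <= (4 * (G0 * s0)) ^+ 3 by rewrite ler_pXn2r // ?nnegrE; nra.
  rewrite !exprMn in c1; have e4 : (4:R) ^+ 3 = 64 by rewrite !exprS expr0; ring.
  rewrite e4 in c1.
  have c3 : 8 * q ^+ 2 * Gj ^+ 3 * (512 * s0 ^+ 3) <= 8 * q ^+ 2 * Gj ^+ 3 * (q * sj ^+ 3).
    apply: ler_wpM2l => //; apply: mulr_ge0; [nra| apply: exprn_ge0; lra].
  have c5 : 8 * q ^+ 3 * (Gj ^+ 3 * sj ^+ 3) <= 8 * q ^+ 3 * (64 * (G0 ^+ 3 * s0 ^+ 3)).
    by apply: ler_wpM2l => //; apply: mulr_ge0 => //; apply: exprn_ge0; lra.
  have s3 : 0 < 512 * s0 ^+ 3 by apply: mulr_gt0 => //; apply: exprn_gt0.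
  rewrite -(ler_pM2r s3).
  have f1 : 8 * q ^+ 2 * Gj ^+ 3 * (q * sj ^+ 3) = 8 * q ^+ 3 * (Gj ^+ 3 * sj ^+ 3) by ring.
  have f2 : 8 * q ^+ 3 * (64 * (G0 ^+ 3 * s0 ^+ 3)) = (q * G0) ^+ 3 * (512 * s0 ^+ 3) by rewrite exprMn; ring.
  lra.
apply: (le_trans A); apply: (le_trans B); rewrite ler_pXn2r // ?nnegrE; nra.
Qed.

Lemma ln_ineq (R : realType) (D q G0 Gj : R) : 4 <= D -> 0 < q -> 0 <= Gj -> Gj <= G0 ->
  (1 + Gj) * (1 + q * Gj) ^+ 2 <= (1 + q * G0) ^+ 3 ->
  (D - 1) * ln (1 + q * Gj) + (ln (1 + Gj) - ln (1 + q * Gj)) <= (D - 1) * ln (1 + q * G0).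
Proof.
move=> D4 q0 Gj0 hG h.
have qGj : 0 <= q * Gj by apply: mulr_ge0 => //; lra.
have qG0 : q * Gj <= q * G0 by apply: ler_wpM2l => //; lra.
have p1 : 0 < 1 + q * Gj by lra.
have p2 : 0 < 1 + q * G0 by lra.
have p3 : 0 < 1 + Gj by lra.
have m1 : ln (1 + q * Gj) <= ln (1 + q * G0).
  by rewrite ler_ln ?posrE //; lra.
have m2 : ln (1 + Gj) + 2 * ln (1 + q * Gj) <= 3 * ln (1 + q * G0).
  have hA : 0 < (1 + Gj) * (1 + q * Gj) ^+ 2 by apply: mulr_gt0 => //; apply: exprn_gt0.
  have hB : 0 < (1 + q * G0) ^+ 3 by apply: exprn_gt0.
  have p1' : 0 < (1 + q * Gj) ^+ 2 by apply: exprn_gt0.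
  have hA' : (1 + Gj) * (1 + q * Gj) ^+ 2 \in Num.pos by rewrite posrE.
  have hB' : (1 + q * G0) ^+ 3 \in Num.pos by rewrite posrE.
  have p3' : 1 + Gj \in Num.pos by rewrite posrE.
  have p1'' : (1 + q * Gj) ^+ 2 \in Num.pos by rewrite posrE.
  move: h; rewrite -(ler_ln hA' hB') (lnM p3' p1'') (lnXn 2 p1) (lnXn 3 p2).
  by rewrite !mulr2n -[_ *+ 3]mulr_natl; move=> h; lra.
have m3 : 0 <= (D - 4) * (ln (1 + q * G0) - ln (1 + q * Gj)).
  by apply: mulr_ge0; lra.
set L0 := ln (1 + q * G0) in m1 m2 m3 *; set c := ln (1 + q * Gj) in m1 m2 m3 *.
set l := ln (1 + Gj) in m2 *.
have e : (D - 1) * L0 - ((D - 1) * c + (l - c)) = (D - 4) * (L0 - c) + (3 * L0 - (l + 2 * c)) by ring.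
rewrite -subr_ge0 e; apply: addr_ge0 => //; lra.
Qed.



Lemma dot_sum (R : realType) (d : nat) (P : 'I_d -> 'I_d -> R) (g : 'I_d -> R)
  (i0 j : 'I_d) :
  dotv (gvec P g j) (fun k => if k == i0 then 0 else 1) =
  \sum_(k < d | k != i0) ln (1 + Qhit P k j * g j).
Proof.
rewrite /dotv (bigD1 i0) //= eqxx mulr0 add0r.
by apply: eq_bigr => k /negbTE ->; rewrite mulr1.
Qed.

Lemma gamma_excl (R : realType) (d : nat) (p : R) (g : 'I_d -> R) (i0 : 'I_d)
  (q t : R) (s : 'I_d -> R) :
  (3 < d)%N -> 0 < q -> q <= 1 -> 0 < t ->
  (forall k j : 'I_d, k != j -> Qhit (@unif_routing R d p) k j = q) ->
  (forall i, 0 < s i) ->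
  (forall j, j != i0 -> 512 * s i0 ^+ 3 <= q * s j ^+ 3) ->
  (forall j, t <= 2 * g j * s j /\ g j * s j <= 2 * t) ->
  (forall j, j != i0 -> 1 <= q * g j) ->
  (forall i, 0 <= g i) ->
  ~ Gamma (@unif_routing R d p) g.
Proof.
move=> d3 q0 q1 t0 hQ s0 hs hw hq g0 [_ hG].
have d1 : (1 < d)%N by apply: ltn_trans d3.
pose v := fun k : 'I_d => if k == i0 then 0 else 1 : R.
have [i1 i1ne] : exists i1 : 'I_d, i1 != i0.
  case: (eqVneq (val i0) 0%N) => h.
    exists (Ordinal d1); apply/eqP => /(congr1 val) /=; rewrite h.
    done.
  exists (Ordinal (ltn_trans (ltnSn 0) d1)); apply/eqP => e.
  by move: h; rewrite -e.
have := hG i0 v.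
have vge : forall k, 0 <= v k by move=> k; rewrite /v; case: ifP.
have vnz : exists k, v k != 0 by exists i1; rewrite /v (negbTE i1ne) oner_neq0.
move=> /(_ vge vnz); rewrite /v eqxx => /(_ erefl).
apply/negP; rewrite -leNgt.
apply: (big_ind (fun x => x <= _)%E) => //.
- by rewrite leNye.
- by move=> x y hx hy; rewrite ge_max hx hy.
move=> j _; rewrite lee_fin !dot_sum.
have D0 : \sum_(k < d | k != i0) ln (1 + Qhit (unif_routing p) k i0 * g i0) =
    (d%:R - 1) * ln (1 + q * g i0).
  by rewrite -(@sum_neq_const R d i0); apply: eq_bigr => k hk; rewrite hQ.
rewrite D0.
case: (eqVneq j i0) => [->|hj]; first by rewrite D0.
have Dj : \sum_(k < d | k != i0) ln (1 + Qhit (unif_routing p) k j * g j) =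
    (d%:R - 1) * ln (1 + q * g j) + (ln (1 + g j) - ln (1 + q * g j)).
  rewrite -(@sum_neq_const R d i0).
  have -> : \sum_(k < d | k != i0) ln (1 + Qhit (unif_routing p) k j * g j) =
    \sum_(k < d | k != i0) (ln (1 + q * g j) + (ln (1 + Qhit (unif_routing p) k j * g j) - ln (1 + q * g j))).
    by apply: eq_bigr => k _; ring.
  rewrite big_split /=; congr (_ + _).
  rewrite (bigD1 j) //= Qhit_self mul1r big1 ?addr0 // => k /andP[_ hk].
  by rewrite hQ // subrr.
rewrite Dj.
have [hle hcub] := @cubic R q (s i0) (s j) (g i0) (g j) t q0 q1 (s0 i0) (s0 j) (hs j hj) (proj1 (hw i0)) (proj2 (hw j))
   (hq j hj) (g0 i0) t0.
apply: (@ln_ineq R) => //.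
by have := d3; rewrite -(ler_nat R) => h; apply: le_trans h; rewrite ler_nat.
Qed.



Theorem proposition3p5 (R : realType) (d : nat) (lam : 'I_d -> R) :
  (3 < d)%N ->
  \sum_(i < d) lam i = 1 ->
  (forall i : 'I_d, (i : nat) = 0%N -> lam i = 0) ->
  (forall i : 'I_d, (i : nat) <> 0%N -> 0 < lam i) ->
  exists p0 : R, 0 < p0 /\
    forall p : R, 0 < p -> p < p0 -> p < (d.-1%:R)^-1 ->
    exists tp : R, 0 < tp /\
      forall (t : R) (mu nu : 'I_d -> R),
        tp < t ->
        (forall i, 0 < mu i) ->
        traffic_sol lam (@unif_routing R d p) nu ->
        (forall nu', traffic_sol lam (@unif_routing R d p) nu' -> nu' = nu) ->
        (forall i, 0 < nu i) ->
        (forall i, Num.sqrt (mu i) - Num.sqrt (nu i) = t) ->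
        hypA lam mu (@unif_routing R d p) ->
        hypB mu nu ->
        sup_value (@unif_routing R d p) mu nu <> sqrt_value mu nu.
Proof.
move=> d3 hsum hl0 hlpos.
have d0 : (0 < d)%N by apply: ltn_trans d3.
pose i0 : 'I_d := Ordinal d0.
have lam0 : lam i0 = 0 by apply: hl0.
have lampos : forall j, j != i0 -> 0 < lam j.
  move=> j hj; apply: hlpos => h; move/negP: hj; apply; apply/eqP/val_inj.
  by rewrite /= h.
have lamge : forall j, 0 <= lam j.
  by move=> j; case: (eqVneq j i0) => [->|hj]; [rewrite lam0 | apply/ltW/lampos].
pose m := \big[Num.min/1]_(j < d | j != i0) lam j ^+ 3.
have m0 : 0 < m.
  apply: (big_ind (fun x => 0 < x)) => //.
    by move=> x y hx hy; rewrite lt_min hx hy.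
  by move=> j hj; apply: exprn_gt0; apply: lampos.
have mle : forall j, j != i0 -> m <= lam j ^+ 3.
  by move=> j hj; rewrite /m (bigD1 j) //= ge_min lexx.
have dR : 4 <= (d%:R : R) by rewrite (ler_nat R 4 d).
exists (Num.min (1 / (2 * (d%:R - 1))) (m / (8*8*8*8*8*8) / 8)).
split.
  rewrite lt_min; apply/andP; split; first by apply: divr_gt0 => //; lra.
  by apply: divr_gt0; [apply: divr_gt0|]; lra.
move=> p p0 pp0 _.
move: pp0; rewrite lt_min => /andP[pa pb].
have hp1 : (d%:R - 1) * p <= 1 / 2.
  move: pa; rewrite ltr_pdivlMr; last lra.
  move=> h; rewrite ler_pdivlMr; lra.
have hpm : p * (8*8*8*8*8*8) * 8 < m.
  by move: pb; rewrite ltr_pdivlMr ?ltr_pdivlMr //; lra.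
have r0 : 0 <= (d%:R - 2) * p by apply: mulr_ge0; lra.
have r1 : (d%:R - 2) * p < 1 by nra.
pose q := p / (1 - (d%:R - 2) * p).
have qp : p <= q.
  rewrite /q ler_pdivlMr; last lra.
  rewrite -subr_ge0.
  have -> : p - p * (1 - (d%:R - 2) * p) = p * ((d%:R - 2) * p) by ring.
  by apply: mulr_ge0 => //; lra.
have q1 : q <= 1.
  by rewrite /q ler_pdivrMr; lra.
have q0 : 0 < q by lra.
have hQ : forall k j : 'I_d, k != j -> Qhit (@unif_routing R d p) k j = q.
  by move=> k j kj; rewrite (@Qhit_other R d p k j kj).
have tp0 : 0 < 10 / p by apply: divr_gt0.
exists (10 / p + 10); split; first lra.
move=> t mu nu ht mupos htr _ nupos hsq _ _.
have [hnu hN] := @traffic_facts R d lam nu p hsum htr.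
set N := \sum_(i < d) nu i in hnu hN.
have a1 : 1 / 2 <= 1 - (d%:R - 1) * p by lra.
have a2 : 1 - (d%:R - 1) * p <= 1 by nra.
have N1 : 1 <= N by nra.
have N2 : N <= 2 by nra.
have nuN : forall j, nu j <= N.
  move=> j; rewrite /N (bigD1 j) //= lerDl; apply: sumr_ge0 => i _; exact/ltW.
have nup : forall j, p / 2 <= nu j.
  move=> j; have := hnu j; have := lamge j => h1 h2.
  have : p <= nu j * (1 + p) by nra.
  move=> h3; nra.
pose s := fun j => Num.sqrt (nu j).
have s0 : forall j, 0 < s j by move=> j; rewrite /s sqrtr_gt0.
have s2 : forall j, s j ^+ 2 = nu j by move=> j; rewrite /s sqr_sqrtr // ltW.
have smu : forall j, mu j = (s j + t) ^+ 2.
  move=> j; have := hsq j; rewrite -/(s j) => h.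
  by rewrite -(sqr_sqrtr (ltW (mupos j))); congr (_ ^+ 2); rewrite -h; ring.
have sp : forall j, p / 2 <= s j.
  move=> j; have := s2 j; have := nup j; have := s0 j => h0 h1 h2.
  rewrite leNgt; apply/negP => h; nra.
have sle : forall j, s j <= 2.
  move=> j; have := s2 j; have := nuN j; have := s0 j => h0 h1 h2.
  rewrite leNgt; apply/negP => h; nra.
have key : forall j, j != i0 -> 512 * s i0 ^+ 3 <= q * s j ^+ 3.
  move=> j hj.
  set K : R := 8*8*8*8*8*8 in hpm pb *.
  have K0 : 0 < K by rewrite /K; lra.
  have e0 : nu i0 * (1 + p) = p * N by rewrite hnu lam0 add0r.
  have ej : lam j <= nu j * (1 + p) by rewrite hnu lerDl; apply: mulr_ge0; lra.
  have c1 : lam j ^+ 3 <= (nu j * (1 + p)) ^+ 3.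
    have la := lamge j.
    have nj : 0 <= nu j * (1 + p) by apply: mulr_ge0; [exact/ltW | lra].
    by rewrite ler_pXn2r ?nnegrE.
  have c2 : p * K * 8 <= (nu j * (1 + p)) ^+ 3.
    by apply: le_trans c1; apply: le_trans (mle j hj); apply: ltW.
  have c3 : N ^+ 3 <= 8.
    have : N ^+ 3 <= 2 ^+ 3 by rewrite ler_pXn2r // ?nnegrE; lra.
    by rewrite !exprS expr0; lra.
  have c4 : q ^+ 2 * (p * K * 8) <= q ^+ 2 * (nu j * (1 + p)) ^+ 3.
    by apply: ler_wpM2l => //; apply: exprn_ge0; lra.
  have c5 : p ^+ 2 * (p * K * 8) <= q ^+ 2 * (p * K * 8).
    apply: ler_wpM2r; first by apply: mulr_ge0; [apply: mulr_ge0|]; lra.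
    by rewrite ler_pXn2r // ?nnegrE; lra.
  have c6 : K * (p * N) ^+ 3 <= p ^+ 2 * (p * K * 8).
    have -> : K * (p * N) ^+ 3 = (K * p ^+ 3) * N ^+ 3 by ring.
    have -> : p ^+ 2 * (p * K * 8) = (K * p ^+ 3) * 8 by ring.
    by apply: ler_wpM2l => //; apply: mulr_ge0; [lra | apply: exprn_ge0; lra].
  have c7 : K * nu i0 ^+ 3 <= q ^+ 2 * nu j ^+ 3.
    have p3 : 0 < (1 + p) ^+ 3 by apply: exprn_gt0; lra.
    rewrite -(ler_pM2r p3).
    have -> : K * nu i0 ^+ 3 * (1 + p) ^+ 3 = K * (nu i0 * (1 + p)) ^+ 3 by ring.
    have -> : q ^+ 2 * nu j ^+ 3 * (1 + p) ^+ 3 = q ^+ 2 * (nu j * (1 + p)) ^+ 3 by ring.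
    rewrite e0; lra.
  have X0 : 0 <= q * s j ^+ 3 by apply: mulr_ge0; [lra | apply: exprn_ge0; exact/ltW].
  have Y0 : 0 <= 512 * s i0 ^+ 3 by apply: mulr_ge0; [lra | apply: exprn_ge0; exact/ltW].
  rewrite -(@ler_pXn2r _ 2) // ?nnegrE //.
  have -> : (512 * s i0 ^+ 3) ^+ 2 = K * (s i0 ^+ 2) ^+ 3 by rewrite /K; ring.
  have -> : (q * s j ^+ 3) ^+ 2 = q ^+ 2 * (s j ^+ 2) ^+ 3 by ring.
  by rewrite !s2.
have t10 : 10 / p < t by lra.
have tp : 10 < p * t.
  by move: t10; rewrite ltr_pdivrMr // mulrC.
have sqv : ((t ^+ 2)%:E <= sqrt_value mu nu)%E.
  apply: (big_ind (fun x => ((t ^+ 2)%:E <= x)%E)) => //.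
  - exact: leey.
  - by move=> x y hx hy; rewrite le_min hx hy.
  - by move=> i _; rewrite hsq.
have supv : (sup_value (@unif_routing R d p) mu nu <= (t ^+ 2 - 1)%:E)%E.
  apply: ge_ereal_sup => _ [g Hg <-].
  rewrite leNgt; apply/negP => hlt.
  have hterm : forall i, t ^+ 2 - 1 < g i * (mu i / (1 + g i) - nu i).
    move=> i; rewrite -lte_fin; apply: (lt_le_trans hlt).
    by rewrite /objective (bigD1 i) //= ge_min lexx.
  have g0 : forall i, 0 <= g i by case: Hg.
  have hw : forall j, t <= 2 * g j * s j /\ g j * s j <= 2 * t.
    move=> j; apply: window => //.
    - have := sp j; nra.
    - lra.
    - by have := hterm j; rewrite smu -(s2 j).
  apply: (@gamma_excl R d p g i0 q t s d3 q0 q1 _ hQ s0 key hw _ g0 Hg).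
    lra.
  move=> j hj; have [h1 _] := hw j; have := sle j; have := g0 j => h2 h3.
  have : t <= 4 * g j by nra.
  nra.
move=> heq; move: sqv; rewrite -heq => h.
have := le_trans h supv; rewrite lee_fin; lra.
Qed.
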